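(* Let $T:X\rightrightarrows X^*$ be a maximal monotone operator on a real Banach space $X$ with $\mathrm{int}\,D_T\ne\emptyset$. Then $T$ is directionally inf bounded at every $x\in\mathrm{int}\,D_T$.
   Context: For $x\in X$ and $A\subset X$, $K_{x,A}=\{(1-t)x+ta: 0\le t\le1,\ a\in A\}$; $B(x,\epsilon)$ is the open ball. A monotone operator $T$ is directionally inf bounded at $x\in D_T$ if for every $y\in X$ there exist $\epsilon>0$ and $M>0$ such that for every $z\in K_{y,B(x,\epsilon)}\cap D_T$ there is $z^*\in T(z)$ with $\langle z^*,z-y\rangle\le M\|z-y\|$. *)

(* Defs.v *)
From Stdlib Require Import Reals.
Open Scope R_scope.

Record Banach : Type := {
  bcar :> Type;
  bzero : bcar;
  badd : bcar -> bcar -> bcar;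
  bopp : bcar -> bcar;
  bscal : R -> bcar -> bcar;
  bnorm : bcar -> R;
  badd_assoc : forall x y z, badd x (badd y z) = badd (badd x y) z;
  badd_comm : forall x y, badd x y = badd y x;
  badd_0 : forall x, badd x bzero = x;
  badd_opp : forall x, badd x (bopp x) = bzero;
  bscal_assoc : forall a b x, bscal a (bscal b x) = bscal (a * b) x;
  bscal_1 : forall x, bscal 1 x = x;
  bscal_distr_l : forall a x y, bscal a (badd x y) = badd (bscal a x) (bscal a y);
  bscal_distr_r : forall a b x, bscal (a + b) x = badd (bscal a x) (bscal b x);
  bnorm_nonneg : forall x, 0 <= bnorm x;
  bnorm_eq0 : forall x, bnorm x = 0 -> x = bzero;
  bnorm_scal : forall a x, bnorm (bscal a x) = Rabs a * bnorm x;
  bnorm_triangle : forall x y, bnorm (badd x y) <= bnorm x + bnorm y;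
  bcomplete : forall u : nat -> bcar,
    (forall eps, 0 < eps -> exists N, forall n m, (N <= n)%nat -> (N <= m)%nat ->
        bnorm (badd (u n) (bopp (u m))) < eps) ->
    exists l, forall eps, 0 < eps -> exists N, forall n, (N <= n)%nat ->
        bnorm (badd (u n) (bopp l)) < eps
}.

Definition bsub {X : Banach} (x y : X) : X := badd X x (bopp X y).

Definition in_dual {X : Banach} (f : X -> R) : Prop :=
  (forall x y, f (badd X x y) = f x + f y) /\
  (forall a x, f (bscal X a x) = a * f x) /\
  (exists M, forall x, Rabs (f x) <= M * bnorm X x).

(** A set-valued operator X ⇉ X^*, given by its graph. *)
Definition operator (X : Banach) := X -> (X -> R) -> Prop.

Definition dom {X : Banach} (T : operator X) (x : X) : Prop := exists xs, T x xs.

Definition dual_valued {X : Banach} (T : operator X) : Prop :=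
  forall x xs, T x xs -> in_dual xs.

Definition monotone {X : Banach} (T : operator X) : Prop :=
  forall x y xs ys, T x xs -> T y ys -> 0 <= xs (bsub x y) - ys (bsub x y).

Definition maximal_monotone {X : Banach} (T : operator X) : Prop :=
  dual_valued T /\ monotone T /\
  forall S : operator X, dual_valued S -> monotone S ->
    (forall x xs, T x xs -> S x xs) -> forall x xs, S x xs -> T x xs.

Definition oball {X : Banach} (x : X) (eps : R) (z : X) : Prop :=
  bnorm X (bsub z x) < eps.

Definition int_pts {X : Banach} (A : X -> Prop) (x : X) : Prop :=
  exists eps, 0 < eps /\ forall z, oball x eps z -> A z.

Definition Kcone {X : Banach} (x : X) (A : X -> Prop) (z : X) : Prop :=
  exists t a, 0 <= t <= 1 /\ A a /\
    z = badd X (bscal X (1 - t) x) (bscal X t a).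

Definition directionally_inf_bounded {X : Banach} (T : operator X) (x : X) : Prop :=
  dom T x /\
  forall y : X, exists eps M, 0 < eps /\ 0 < M /\
    forall z, Kcone y (oball x eps) z -> dom T z ->
      exists zs, T z zs /\ zs (bsub z y) <= M * bnorm X (bsub z y).

(* Main.v *)
Require Import Defs.
From Stdlib Require Import Reals.
From Stdlib Require Import Lra Lia Classical IndefiniteDescription.
Open Scope R_scope.

Section Vec.
Variable X : Banach.

Lemma add0l (x : X) : badd X (bzero X) x = x.
Proof. rewrite badd_comm. apply badd_0. Qed.

Lemma add_cancel (a b c : X) : badd X a b = badd X a c -> b = c.
Proof.
  intros H. rewrite <- (add0l b), <- (add0l c). rewrite <- (badd_opp X a).
  rewrite (badd_comm X a (bopp X a)). rewrite <- !badd_assoc. rewrite H. reflexivity.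
Qed.

Lemma scal0 (v : X) : bscal X 0 v = bzero X.
Proof.
  apply (add_cancel (bscal X 0 v)). rewrite badd_0, <- bscal_distr_r, Rplus_0_r.
  reflexivity.
Qed.

Lemma opp_scal (v : X) : bopp X v = bscal X (-1) v.
Proof.
  apply (add_cancel v). rewrite badd_opp. rewrite <- (bscal_1 X v) at 1.
  rewrite <- bscal_distr_r. replace (1 + -1) with 0 by ring. now rewrite scal0.
Qed.

Lemma norm_opp (v : X) : bnorm X (bopp X v) = bnorm X v.
Proof.
  rewrite opp_scal, bnorm_scal. replace (Rabs (-1)) with 1. ring.
  unfold Rabs; destruct Rcase_abs; lra.
Qed.

Lemma norm0 : bnorm X (bzero X) = 0.
Proof. rewrite <- (scal0 (bzero X)), bnorm_scal, Rabs_R0. ring. Qed.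

Lemma sub_self (a : X) : bsub a a = bzero X.
Proof. apply badd_opp. Qed.

Lemma sub_add (a b c : X) : badd X (bsub a b) (bsub b c) = bsub a c.
Proof.
  unfold bsub. rewrite <- badd_assoc. f_equal.
  rewrite badd_assoc, (badd_comm X (bopp X b) b), badd_opp, add0l. reflexivity.
Qed.

Lemma opp_sub (a b : X) : bsub b a = bopp X (bsub a b).
Proof.
  apply (add_cancel (bsub a b)). rewrite sub_add, badd_opp. apply sub_self.
Qed.

Lemma norm_sub_sym (a b : X) : bnorm X (bsub a b) = bnorm X (bsub b a).
Proof. rewrite (opp_sub a b), norm_opp. reflexivity. Qed.

Lemma norm_sub_tri (a b c : X) :
  bnorm X (bsub a c) <= bnorm X (bsub a b) + bnorm X (bsub b c).
Proof. rewrite <- (sub_add a b c). apply bnorm_triangle. Qed.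

Lemma add_sub (c u : X) : bsub (badd X c u) c = u.
Proof.
  unfold bsub. rewrite (badd_comm X c u), <- badd_assoc, badd_opp, badd_0. reflexivity.
Qed.

Lemma add_sub' (b a : X) : badd X b (bsub a b) = a.
Proof.
  unfold bsub. rewrite badd_comm, <- badd_assoc, (badd_comm X (bopp X b) b), badd_opp, badd_0.
  reflexivity.
Qed.

Lemma norm_le_sub (a b : X) : bnorm X a <= bnorm X (bsub a b) + bnorm X b.
Proof.
  pose proof (bnorm_triangle X b (bsub a b)) as H. rewrite add_sub' in H. lra.
Qed.

Lemma sub_norm_le (a b : X) : bnorm X (bsub a b) <= bnorm X a + bnorm X b.
Proof. unfold bsub. rewrite <- (norm_opp b). apply bnorm_triangle. Qed.

Lemma kcone_sub (y a : X) t :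
  bsub (badd X (bscal X (1-t) y) (bscal X t a)) y = bscal X t (bsub a y).
Proof.
  unfold bsub. rewrite bscal_distr_l. rewrite (opp_scal y). rewrite bscal_assoc.
  rewrite (badd_comm X (bscal X (1-t) y) (bscal X t a)), <- badd_assoc, <- bscal_distr_r.
  f_equal. f_equal. ring.
Qed.

Lemma kcone_one (y a : X) : badd X (bscal X (1-1) y) (bscal X 1 a) = a.
Proof. replace (1-1) with 0 by ring. rewrite scal0, bscal_1, add0l. reflexivity. Qed.

Section Lin.
Variable f : X -> R.
Hypothesis Hf : in_dual f.

Lemma lin_add a b : f (badd X a b) = f a + f b.
Proof. destruct Hf as [H _]. apply H. Qed.

Lemma lin_scal a v : f (bscal X a v) = a * f v.
Proof. destruct Hf as [_ [H _]]. apply H. Qed.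

Lemma lin0 : f (bzero X) = 0.
Proof. rewrite <- (scal0 (bzero X)), lin_scal. ring. Qed.

Lemma lin_opp v : f (bopp X v) = - f v.
Proof. rewrite opp_scal, lin_scal. ring. Qed.

Lemma lin_sub a b : f (bsub a b) = f a - f b.
Proof. unfold bsub. rewrite lin_add, lin_opp. ring. Qed.

Lemma lin_bound : exists M, 0 <= M /\ forall v, Rabs (f v) <= M * bnorm X v.
Proof.
  destruct Hf as [_ [_ [M HM]]]. exists (Rabs M). split. apply Rabs_pos.
  intros v. eapply Rle_trans. apply HM. apply Rmult_le_compat_r. apply bnorm_nonneg.
  apply Rle_abs.
Qed.
End Lin.
End Vec.

Fixpoint iter_seq {A : Type} (F : nat -> A -> A) (a0 : A) (k : nat) : A :=
  match k with O => a0 | S k => F k (iter_seq F a0 k) end.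

Lemma baire (X : Banach) (C : nat -> X -> Prop) (x0 : X) (r0 : R) :
  0 < r0 ->
  (forall n p, ~ C n p -> exists r, 0 < r /\ forall q, bnorm X (bsub q p) < r -> ~ C n q) ->
  (forall z, bnorm X (bsub z x0) < r0 -> exists n, C n z) ->
  exists n c rho, 0 < rho /\ forall z, bnorm X (bsub z c) < rho -> C n z.
Proof.
  intros Hr0 Hcl Hcov. apply NNPP; intro Hno.
  assert (H: forall n c rho, 0 < rho -> exists z, bnorm X (bsub z c) < rho /\ ~ C n z).
  { intros n c rho Hrho. apply NNPP; intro Hz. apply Hno. exists n, c, rho. split; auto.
    intros z Hzc. apply NNPP. intro HC. apply Hz. exists z; auto. }
  assert (Hstep: forall n (s : X * R), exists s' : X * R, 0 < snd s ->
     (0 < snd s' /\ snd s' <= snd s / 2 /\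
      forall z, bnorm X (bsub z (fst s')) <= snd s' ->
        bnorm X (bsub z (fst s)) < snd s /\ ~ C n z)).
  { intros n [c rho]. simpl. destruct (Rlt_dec 0 rho) as [Hrho|Hrho].
    2: { exists (c, rho). intro; contradiction. }
    destruct (H n c rho Hrho) as [p [Hp HCp]].
    destruct (Hcl n p HCp) as [r [Hr Hr']].
    set (rho' := Rmin (r/2) (Rmin ((rho - bnorm X (bsub p c))/2) (rho/2))).
    exists (p, rho'). intros _. simpl.
    assert (h1: rho' <= r/2) by apply Rmin_l.
    assert (h2: rho' <= (rho - bnorm X (bsub p c))/2)
      by (eapply Rle_trans; [apply Rmin_r | apply Rmin_l]).
    assert (h3: rho' <= rho/2)
      by (eapply Rle_trans; [apply Rmin_r | apply Rmin_r]).
    assert (0 < rho') by (unfold rho'; repeat apply Rmin_glb_lt; lra).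
    split; [lra|split;[lra|]]. intros z Hz. split.
    - pose proof (norm_sub_tri X z p c). lra.
    - apply Hr'. lra. }
  set (F := fun n s => proj1_sig (constructive_indefinite_description _ (Hstep n s))).
  assert (Hs : forall n s, 0 < snd s -> 0 < snd (F n s) /\ snd (F n s) <= snd s / 2 /\
      forall z, bnorm X (bsub z (fst (F n s))) <= snd (F n s) ->
        bnorm X (bsub z (fst s)) < snd s /\ ~ C n z).
  { intros n s. unfold F. destruct (constructive_indefinite_description _ (Hstep n s)). simpl. auto. }
  set (u := iter_seq F (x0, r0)).
  assert (Hpos: forall k, 0 < snd (u k)).
  { induction k; simpl. exact Hr0. apply Hs. exact IHk. }
  assert (Hhalf: forall k, snd (u (S k)) <= snd (u k) / 2).
  { intros k. apply (Hs k (u k) (Hpos k)). }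
  assert (Hnest: forall k z, bnorm X (bsub z (fst (u (S k)))) <= snd (u (S k)) ->
      bnorm X (bsub z (fst (u k))) < snd (u k) /\ ~ C k z).
  { intros k. apply (Hs k (u k) (Hpos k)). }
  assert (Hsmall: forall k, snd (u k) <= r0 * (/2)^k).
  { induction k. simpl. lra. pose proof (Hhalf k). simpl pow. lra. }
  assert (Hin: forall d k z, bnorm X (bsub z (fst (u (d + k)%nat))) <= snd (u (d + k)%nat) ->
      bnorm X (bsub z (fst (u k))) <= snd (u k)).
  { induction d; intros k z Hz. exact Hz. apply IHd. simpl plus in Hz.
    apply Rlt_le. apply (Hnest _ _ Hz). }
  assert (Hc: forall k m, (k <= m)%nat -> bnorm X (bsub (fst (u m)) (fst (u k))) <= snd (u k)).
  { intros k m Hkm. pose proof (Hin (m-k)%nat k (fst (u m))) as Hx.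
    replace (m - k + k)%nat with m in Hx by lia. apply Hx.
    rewrite sub_self, norm0. apply Rlt_le, Hpos. }
  assert (Hcauchy: forall eps, 0 < eps -> exists N, forall n m, (N <= n)%nat -> (N <= m)%nat ->
        bnorm X (badd X (fst (u n)) (bopp X (fst (u m)))) < eps).
  { intros eps Heps.
    assert (Hh: Rabs (/2) < 1) by (rewrite Rabs_pos_eq; lra).
    destruct (pow_lt_1_zero (/2) Hh (eps/(2*r0))) as [N HN].
    { apply Rdiv_lt_0_compat; lra. }
    exists N. intros n m Hn Hm.
    specialize (HN N (le_n N)). rewrite Rabs_pos_eq in HN by (apply pow_le; lra).
    assert (r0 * (/2)^N < eps/2).
    { replace (eps/2) with (r0 * (eps/(2*r0))) by (field; lra).
      apply Rmult_lt_compat_l; lra. }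
    pose proof (Hsmall N). pose proof (Hc N n Hn). pose proof (Hc N m Hm).
    pose proof (norm_sub_tri X (fst (u n)) (fst (u N)) (fst (u m))) as Htr.
    rewrite (norm_sub_sym X (fst (u N)) (fst (u m))) in Htr.
    unfold bsub in *. lra. }
  destruct (bcomplete X (fun n => fst (u n)) Hcauchy) as [l Hlim].
  assert (Hl: forall k, bnorm X (bsub l (fst (u k))) <= snd (u k)).
  { intros k. apply Rnot_lt_le; intro Hlt.
    destruct (Hlim (bnorm X (bsub l (fst (u k))) - snd (u k))) as [N HN]. lra.
    specialize (HN (max N k) (Nat.le_max_l _ _)). cbv beta in HN.
    pose proof (Hc k (max N k) (Nat.le_max_r _ _)).
    pose proof (norm_sub_tri X l (fst (u (max N k))) (fst (u k))) as Htr.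
    rewrite (norm_sub_sym X l (fst (u (max N k)))) in Htr. unfold bsub in *. lra. }
  destruct (Hnest 0%nat l (Hl 1%nat)) as [H0 _].
  destruct (Hcov l H0) as [n Hn].
  destruct (Hnest n l (Hl (S n))) as [_ Hn']. contradiction.
Qed.

Theorem lemma2p13 (X : Banach) (T : operator X) :
  maximal_monotone T ->
  (exists x0 : X, int_pts (dom T) x0) ->
  forall x : X, int_pts (dom T) x -> directionally_inf_bounded T x.
Proof.
  intros [Hdual [Hmon _]] _ x [e0 [He0 Hint]].
  assert (HxD: dom T x).
  { apply Hint. unfold oball. rewrite sub_self, norm0. exact He0. }
  set (Gs := fun (n : nat) v => forall w ws, T w ws -> ws v - ws w <= INR n * (1 + bnorm X w)).
  set (Gr := fun (n : nat) v => forall w ws, T w ws ->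
              2 * ws x - ws v - ws w <= INR n * (1 + bnorm X w)).
  destruct (baire X (fun n v => Gs n v /\ Gr n v) x e0 He0) as [n [c [rho [Hrho HC]]]].
  - intros n p Hnp.
    assert (Hex: exists w ws, T w ws /\ (INR n * (1 + bnorm X w) < ws p - ws w \/
                 INR n * (1 + bnorm X w) < 2 * ws x - ws p - ws w)).
    { apply NNPP; intro Hn. apply Hnp. split; intros w ws Hw; apply Rnot_lt_le; intro Hlt;
      apply Hn; exists w, ws; auto. }
    destruct Hex as [w [ws [Hw Hv]]].
    destruct (lin_bound X ws (Hdual _ _ Hw)) as [M [HM HMb]].
    set (gap := Rmax (ws p - ws w - INR n * (1 + bnorm X w))
                     (2 * ws x - ws p - ws w - INR n * (1 + bnorm X w))).
    assert (Hgap: 0 < gap).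
    { unfold gap. destruct Hv. eapply Rlt_le_trans; [|apply Rmax_l]; lra.
      eapply Rlt_le_trans; [|apply Rmax_r]; lra. }
    exists (gap / (M+1)). split. apply Rdiv_lt_0_compat; lra.
    intros q Hq [Hq1 Hq2]. specialize (Hq1 w ws Hw). specialize (Hq2 w ws Hw).
    pose proof (HMb (bsub q p)) as Hb. rewrite (lin_sub X ws (Hdual _ _ Hw)) in Hb.
    assert (Hq': bnorm X (bsub q p) * (M+1) < gap).
    { apply (Rmult_lt_compat_r (M+1)) in Hq; [|lra]. unfold Rdiv in Hq.
      rewrite Rmult_assoc, Rinv_l, Rmult_1_r in Hq; lra. }
    pose proof (bnorm_nonneg X (bsub q p)).
    pose proof (Rle_abs (ws q - ws p)).
    pose proof (Rle_abs (-(ws q - ws p))). rewrite Rabs_Ropp in H1.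
    assert (Hg: gap = ws p - ws w - INR n * (1 + bnorm X w) \/
                gap = 2 * ws x - ws p - ws w - INR n * (1 + bnorm X w)).
    { unfold gap, Rmax. destruct (Rle_dec _ _); auto. }
    destruct Hg as [Hg|Hg]; rewrite Hg in Hq'; nra.
  - intros v Hv. destruct (Hint v Hv) as [vs Hvs].
    set (r := badd X x (bsub x v)).
    assert (Hr: oball x e0 r).
    { unfold oball, r. rewrite add_sub, norm_sub_sym. exact Hv. }
    destruct (Hint r Hr) as [rs Hrs].
    pose proof (Hdual _ _ Hvs) as Dv. pose proof (Hdual _ _ Hrs) as Dr.
    destruct (lin_bound X vs Dv) as [Mv [HMv HbV]].
    destruct (lin_bound X rs Dr) as [Mr [HMr HbR]].
    set (K := Mv * (1 + bnorm X v) + Mr * (1 + bnorm X r)).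
    destruct (INR_unbounded K) as [n Hn]. exists n.
    pose proof (bnorm_nonneg X v). pose proof (bnorm_nonneg X r).
    split.
    + intros w ws Hw. pose proof (Hdual _ _ Hw) as Dw.
      pose proof (Hmon v w vs ws Hvs Hw) as Hm.
      rewrite (lin_sub X vs Dv), (lin_sub X ws Dw) in Hm.
      pose proof (HbV (bsub v w)) as Hb. rewrite (lin_sub X vs Dv) in Hb.
      pose proof (Rle_abs (vs v - vs w)).
      pose proof (sub_norm_le X v w). pose proof (bnorm_nonneg X w).
      assert (Mv * bnorm X (bsub v w) <= Mv * (bnorm X v + bnorm X w))
        by (apply Rmult_le_compat_l; lra).
      assert (Mv * (bnorm X v + bnorm X w) <= Mv * (1 + bnorm X v) * (1 + bnorm X w)).
      { pose proof (Rmult_le_pos _ _ (Rmult_le_pos _ _ HMv H) (bnorm_nonneg X w)).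
        pose proof (Rmult_le_pos _ _ (Rmult_le_pos _ _ HMv H0) (bnorm_nonneg X w)). nra. }
      assert (Mv * (1 + bnorm X v) * (1 + bnorm X w) <= K * (1 + bnorm X w)).
      { unfold K. assert (0 <= Mv * (1 + bnorm X v) * (1 + bnorm X w))
          by (repeat apply Rmult_le_pos; lra).
        assert (0 <= Mr * (1 + bnorm X r) * (1 + bnorm X w))
          by (repeat apply Rmult_le_pos; lra). nra. }
      assert (K * (1 + bnorm X w) <= INR n * (1 + bnorm X w))
        by (apply Rmult_le_compat_r; lra).
      lra.
    + intros w ws Hw. pose proof (Hdual _ _ Hw) as Dw.
      pose proof (Hmon r w rs ws Hrs Hw) as Hm.
      rewrite (lin_sub X rs Dr), (lin_sub X ws Dw) in Hm.
      assert (Hwr: ws r = 2 * ws x - ws v).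
      { unfold r. rewrite (lin_add X ws Dw), (lin_sub X ws Dw). ring. }
      pose proof (HbR (bsub r w)) as Hb. rewrite (lin_sub X rs Dr) in Hb.
      pose proof (Rle_abs (rs r - rs w)).
      pose proof (sub_norm_le X r w). pose proof (bnorm_nonneg X w).
      assert (Mr * bnorm X (bsub r w) <= Mr * (bnorm X r + bnorm X w))
        by (apply Rmult_le_compat_l; lra).
      assert (Mr * (bnorm X r + bnorm X w) <= Mr * (1 + bnorm X r) * (1 + bnorm X w)).
      { pose proof (Rmult_le_pos _ _ (Rmult_le_pos _ _ HMr H) (bnorm_nonneg X w)).
        pose proof (Rmult_le_pos _ _ (Rmult_le_pos _ _ HMr H0) (bnorm_nonneg X w)). nra. }
      assert (Mr * (1 + bnorm X r) * (1 + bnorm X w) <= K * (1 + bnorm X w)).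
      { unfold K. assert (0 <= Mv * (1 + bnorm X v) * (1 + bnorm X w))
          by (repeat apply Rmult_le_pos; lra).
        assert (0 <= Mr * (1 + bnorm X r) * (1 + bnorm X w))
          by (repeat apply Rmult_le_pos; lra). nra. }
      assert (K * (1 + bnorm X w) <= INR n * (1 + bnorm X w))
        by (apply Rmult_le_compat_r; lra).
      lra.
  - assert (LB: forall a sa, bnorm X (bsub a x) < rho/2 -> T a sa ->
        forall v, bnorm X (bsub v a) < rho/2 -> sa v - sa a <= INR n * (1 + bnorm X a)).
    { intros a sa Ha Hsa v Hv. pose proof (Hdual _ _ Hsa) as Da.
      set (u := bsub v x).
      assert (Hu: bnorm X u < rho) by (pose proof (norm_sub_tri X v a x); unfold u; lra).
      destruct (HC (badd X c u)) as [Hg _]. { rewrite add_sub. exact Hu. }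
      destruct (HC (bsub c u)) as [_ Hg'].
      { change (bsub c u) with (badd X c (bopp X u)). rewrite add_sub, norm_opp. exact Hu. }
      specialize (Hg a sa Hsa). specialize (Hg' a sa Hsa).
      rewrite (lin_add X sa Da) in Hg. rewrite (lin_sub X sa Da) in Hg'.
      unfold u in *. rewrite (lin_sub X sa Da) in Hg, Hg'. lra. }
    set (N := INR n). assert (HN: 0 <= N) by apply pos_INR.
    set (M := 4 * N * (1 + bnorm X x + rho) / rho + 1).
    pose proof (bnorm_nonneg X x).
    assert (HM0: 0 <= 4 * N * (1 + bnorm X x + rho) / rho).
    { unfold Rdiv. apply Rmult_le_pos. apply Rmult_le_pos; lra.
      left; apply Rinv_0_lt_compat; lra. }
    assert (LB2: forall a sa y, bnorm X (bsub a x) < rho/2 -> T a sa ->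
                 sa (bsub a y) <= M * bnorm X (bsub a y)).
    { intros a sa y Ha Hsa. pose proof (Hdual _ _ Hsa) as Da. set (d := bsub a y).
      destruct (Req_dec (bnorm X d) 0) as [Hd|Hd].
      - rewrite Hd, (bnorm_eq0 X d Hd), (lin0 X sa Da). lra.
      - assert (Hdp: 0 < bnorm X d) by (pose proof (bnorm_nonneg X d); lra).
        set (s := rho / (4 * bnorm X d)).
        assert (Hs0: 0 < s) by (unfold s; apply Rdiv_lt_0_compat; lra).
        assert (Hsd: s * bnorm X d = rho / 4) by (unfold s; field; lra).
        specialize (LB a sa Ha Hsa (badd X a (bscal X s d))).
        rewrite add_sub, bnorm_scal, Rabs_pos_eq in LB by lra.
        specialize (LB ltac:(lra)).
        rewrite (lin_add X sa Da), (lin_scal X sa Da) in LB.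
        pose proof (norm_le_sub X a x).
        assert (Hk: s * sa d <= N * (1 + bnorm X x + rho)).
        { fold N in LB. assert (N * (1 + bnorm X a) <= N * (1 + bnorm X x + rho))
            by (apply Rmult_le_compat_l; lra). lra. }
        assert (Heq: sa d = (s * sa d) * (4 * bnorm X d / rho)) by (unfold s; field; lra).
        rewrite Heq.
        apply Rle_trans with (N * (1 + bnorm X x + rho) * (4 * bnorm X d / rho)).
        + apply Rmult_le_compat_r; [|exact Hk].
          unfold Rdiv. apply Rmult_le_pos; [lra|left; apply Rinv_0_lt_compat; lra].
        + replace (M * bnorm X d) with
            (N * (1 + bnorm X x + rho) * (4 * bnorm X d / rho) + bnorm X d)
            by (unfold M; field; lra). lra. }
    split; [exact HxD|]. intros y. exists (Rmin (rho/2) e0), M.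
    split. apply Rmin_glb_lt; lra. split. unfold M; lra.
    intros z [t [a [Ht [Ha Hz]]]] [zs Hzs].
    unfold oball in Ha.
    assert (Ha1: bnorm X (bsub a x) < rho/2) by (eapply Rlt_le_trans; [exact Ha|apply Rmin_l]).
    assert (Ha2: bnorm X (bsub a x) < e0) by (eapply Rlt_le_trans; [exact Ha|apply Rmin_r]).
    destruct (Hint a Ha2) as [sa Hsa].
    pose proof (Hdual _ _ Hsa) as Da. pose proof (Hdual _ _ Hzs) as Dz.
    destruct (Req_dec t 1) as [Ht1|Ht1].
    + subst t. rewrite kcone_one in Hz. subst z. exists sa. split; auto.
    + exists zs. split; auto. subst z. rewrite kcone_sub.
      rewrite bnorm_scal, Rabs_pos_eq by lra. rewrite (lin_scal X zs Dz).
      pose proof (Hmon _ _ _ _ Hzs Hsa) as Hm.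
      rewrite (lin_sub X zs Dz), (lin_sub X sa Da), !(lin_add X zs Dz), !(lin_add X sa Da),
        !(lin_scal X zs Dz), !(lin_scal X sa Da) in Hm.
      rewrite (lin_sub X zs Dz).
      pose proof (LB2 a sa y Ha1 Hsa) as Hb. rewrite (lin_sub X sa Da) in Hb.
      assert (Hk: zs a - zs y <= sa a - sa y).
      { apply Rmult_le_reg_l with (1 - t); [lra|]. lra. }
      assert (t * (zs a - zs y) <= t * (sa a - sa y)) by (apply Rmult_le_compat_l; lra).
      assert (t * (sa a - sa y) <= t * (M * bnorm X (bsub a y))) by (apply Rmult_le_compat_l; lra).
      lra.
Qed.
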